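(* There is a function $\varepsilon(n)\to0$ such that the following holds. Let $h$ be the histogram of a distribution $p$, let $n$ be a number of samples, and for each integer $1\le j<\log^2 n$ let $m_j<\frac2n\log^2n$ be a probability value. For any faithful set $S$ of $n$ samples from $p$, assign probability $m_j$ to each domain element seen exactly $j$ times in $S$. Then the total error $\sum_{1\le j<\log^2n}\ \sum_{a\text{ seen exactly }j\text{ times}}|p(a)-m_j|$ is within $\varepsilon(n)$ of $\sum_{1\le j<\log^2n}dev_{j,n}(h,m_j)$.
   Context: $\log$ is natural; $poi(\lambda,j)=e^{-\lambda}\lambda^j/j!$; $h(x)$ is the number of domain elements of probability $x$. $dev_{j,n}(h,m)=\sum_{x:h(x)\neq0}|x-m|h(x)poi(nx,j)$. Faithful: for an integer $k\ge0$, bucket $k$ consists of histogram entries with probabilities in $(\frac{k}{n\log^2n},\frac{k+1}{n\log^2n}]$, $B_{poi}(j,k)=\sum_{x \text{ in bucket }k, h(x)\neq0}h(x)poi(nx,j)$, and $B_S(j,k)$ is the number of domain elements in bucket $k$ seen exactly $j$ times in $S$; a set $S$ of $n$ samples is faithful if (1) each domain element of probability $x$ appears $j$ times with $|nx-j|<\max\{\log^{1.5}n,\sqrt{nx\log^{1.5}n}\}$, and (2) for each $j<\log^2n$ and each $k$, $|B_{poi}(j,k)-B_S(j,k)|<n^{0.6}$. *)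

(* Defs.v *)
From Stdlib Require Import Reals Lra Lia List Arith Factorial ZArith.
Import ListNotations.
Open Scope R_scope.

Definition rsum {A : Type} (l : list A) (f : A -> R) : R :=
  fold_right Rplus 0 (map f l).

Definition domain (D : nat) : list nat := seq 0 D.

Definition is_distribution (D : nat) (p : nat -> R) : Prop :=
  (forall a, (a < D)%nat -> 0 <= p a) /\ rsum (domain D) p = 1.

Definition poi (lam : R) (j : nat) : R :=
  exp (- lam) * lam ^ j / INR (fact j).

Definition hist (D : nat) (p : nat -> R) (x : R) : nat :=
  length (filter (fun a => if Req_EM_T (p a) x then true else false) (domain D)).

(* the (distinct) probability values x with h(x) <> 0 *)
Definition hist_support (D : nat) (p : nat -> R) : list R :=
  nodup Req_EM_T (map p (domain D)).

Definition dev (D : nat) (p : nat -> R) (j n : nat) (m : R) : R :=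
  rsum (hist_support D p)
    (fun x => Rabs (x - m) * INR (hist D p x) * poi (INR n * x) j).

Definition in_bucket (n k : nat) (x : R) : Prop :=
  INR k / (INR n * (ln (INR n))^2) < x /\ x <= INR (S k) / (INR n * (ln (INR n))^2).

Definition in_bucketb (n k : nat) (x : R) : bool :=
  if Rlt_dec (INR k / (INR n * (ln (INR n))^2)) x then
    if Rle_dec x (INR (S k) / (INR n * (ln (INR n))^2)) then true else false
  else false.

Definition occ (S : list nat) (a : nat) : nat := count_occ Nat.eq_dec S a.

Definition B_poi (D : nat) (p : nat -> R) (n j k : nat) : R :=
  rsum (filter (in_bucketb n k) (hist_support D p))
    (fun x => INR (hist D p x) * poi (INR n * x) j).

Definition B_S (D : nat) (p : nat -> R) (S : list nat) (n j k : nat) : nat :=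
  length (filter (fun a => andb (in_bucketb n k (p a)) (Nat.eqb (occ S a) j)) (domain D)).

Definition faithful (D : nat) (p : nat -> R) (n : nat) (S : list nat) : Prop :=
  length S = n /\
  (forall a, (a < D)%nat ->
     Rabs (INR n * p a - INR (occ S a)) <
       Rmax (Rpower (ln (INR n)) 1.5)
            (sqrt (INR n * p a * Rpower (ln (INR n)) 1.5))) /\
  (forall j k : nat, INR j < (ln (INR n))^2 ->
     Rabs (B_poi D p n j k - INR (B_S D p S n j k)) < Rpower (INR n) 0.6).

Definition js (n : nat) : list nat :=
  filter (fun j => if Rlt_dec (INR j) ((ln (INR n))^2) then true else false)
    (seq 1 (Z.to_nat (up ((ln (INR n))^2)))).

Definition total_error (D : nat) (p : nat -> R) (S : list nat) (n : nat)
    (m : nat -> R) : R :=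
  rsum (js n) (fun j =>
    rsum (filter (fun a => Nat.eqb (occ S a) j) (domain D))
      (fun a => Rabs (p a - m j))).

Definition total_dev (D : nat) (p : nat -> R) (n : nat) (m : nat -> R) : R :=
  rsum (js n) (fun j => dev D p j n (m j)).

(* Main.v *)
Require Import Defs.
From Stdlib Require Import Reals Lra Lia List Arith Factorial ZArith.
Import ListNotations.
Open Scope R_scope.

Lemma rsum_cons {A} (x : A) l f : rsum (x :: l) f = f x + rsum l f.
Proof. reflexivity. Qed.
Lemma rsum_nil {A} (f : A -> R) : rsum [] f = 0.
Proof. reflexivity. Qed.
Lemma rsum_app {A} (l1 l2 : list A) f : rsum (l1 ++ l2) f = rsum l1 f + rsum l2 f.
Proof. induction l1; simpl; rewrite ?rsum_cons, ?rsum_nil; [ring|]. rewrite IHl1; ring. Qed.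
Lemma rsum_ext {A} (l : list A) f g : (forall x, In x l -> f x = g x) -> rsum l f = rsum l g.
Proof. induction l; intros H; [reflexivity|]. rewrite !rsum_cons, H, IHl; auto. intros; apply H; simpl; auto. simpl; auto. Qed.
Lemma rsum_plus {A} (l : list A) f g : rsum l (fun x => f x + g x) = rsum l f + rsum l g.
Proof. induction l; [unfold rsum; simpl; ring|]. rewrite !rsum_cons, IHl; ring. Qed.
Lemma rsum_minus {A} (l : list A) f g : rsum l (fun x => f x - g x) = rsum l f - rsum l g.
Proof. induction l; [unfold rsum; simpl; ring|]. rewrite !rsum_cons, IHl; ring. Qed.
Lemma rsum_scal {A} (l : list A) c f : rsum l (fun x => c * f x) = c * rsum l f.
Proof. induction l; [unfold rsum; simpl; ring|]. rewrite !rsum_cons, IHl; ring. Qed.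
Lemma rsum_le {A} (l : list A) f g : (forall x, In x l -> f x <= g x) -> rsum l f <= rsum l g.
Proof. induction l; intros H; [unfold rsum; simpl; lra|]. rewrite !rsum_cons.
  apply Rplus_le_compat; [apply H; simpl; auto|apply IHl; intros; apply H; simpl; auto]. Qed.
Lemma rsum_nonneg {A} (l : list A) f : (forall x, In x l -> 0 <= f x) -> 0 <= rsum l f.
Proof. intros H. replace 0 with (rsum l (fun _ => 0)). apply rsum_le; auto.
  induction l; simpl; auto. unfold rsum in *; simpl in *; rewrite IHl; [ring|]; auto. Qed.
Lemma rsum_abs {A} (l : list A) f : Rabs (rsum l f) <= rsum l (fun x => Rabs (f x)).
Proof. induction l; [unfold rsum; simpl; rewrite Rabs_R0; lra|]. rewrite !rsum_cons.
  eapply Rle_trans; [apply Rabs_triang|lra]. Qed.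
Lemma rsum_const {A} (l : list A) c : rsum l (fun _ => c) = INR (length l) * c.
Proof. induction l; [unfold rsum; simpl; ring|]. rewrite rsum_cons, IHl; simpl length; rewrite S_INR; ring. Qed.
Lemma rsum_filter {A} (P : A -> bool) l f :
  rsum (filter P l) f = rsum l (fun x => if P x then f x else 0).
Proof. induction l; [reflexivity|]. simpl filter. rewrite rsum_cons.
  destruct (P a); rewrite ?rsum_cons, IHl; ring. Qed.
Lemma length_filter_rsum {A} (P : A -> bool) l :
  INR (length (filter P l)) = rsum l (fun x => if P x then 1 else 0).
Proof. rewrite <- (Rmult_1_r (INR _)), <- rsum_const, rsum_filter. reflexivity. Qed.
Lemma rsum_swap {A B} (l1 : list A) (l2 : list B) (f : A -> B -> R) :
  rsum l1 (fun a => rsum l2 (fun b => f a b)) = rsum l2 (fun b => rsum l1 (fun a => f a b)).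
Proof. induction l1; simpl.
  - induction l2; [reflexivity|]. rewrite rsum_cons, <- IHl2. unfold rsum; simpl; ring.
  - rewrite rsum_cons, IHl1, <- rsum_plus. reflexivity. Qed.
Lemma rsum_le_filter {A} (P : A -> bool) l f : (forall x, In x l -> 0 <= f x) ->
  rsum (filter P l) f <= rsum l f.
Proof. intros H; rewrite rsum_filter; apply rsum_le; intros x Hx; destruct (P x); [lra|auto]. Qed.
Lemma rsum_ind_notin (U : list R) y g : ~ In y U ->
  rsum U (fun x => if Req_EM_T y x then g x else 0) = 0.
Proof. induction U; intros H; [reflexivity|]. rewrite rsum_cons, IHU.
  destruct (Req_EM_T y a); [subst; exfalso; apply H; simpl; auto|ring].
  intro; apply H; simpl; auto. Qed.
Lemma rsum_ind_in (U : list R) y g : NoDup U -> In y U ->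
  rsum U (fun x => if Req_EM_T y x then g x else 0) = g y.
Proof. induction U; intros H1 H2; [destruct H2|]. rewrite rsum_cons.
  inversion H1; subst. destruct (Req_EM_T y a).
  - subst. rewrite rsum_ind_notin; auto; ring.
  - rewrite IHU; auto; [ring|]. destruct H2; auto; subst; congruence. Qed.

Lemma regroup D p (G : R -> R) :
  rsum (hist_support D p) (fun x => INR (hist D p x) * G x) = rsum (domain D) (fun a => G (p a)).
Proof.
  unfold hist_support, hist.
  rewrite (rsum_ext _ _ (fun x => rsum (domain D) (fun a => if Req_EM_T (p a) x then G x else 0))).
  2:{ intros x _. rewrite length_filter_rsum, Rmult_comm, <- rsum_scal. apply rsum_ext.
      intros a _. destruct (Req_EM_T (p a) x); ring. }
  rewrite rsum_swap. apply rsum_ext. intros a Ha.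
  apply rsum_ind_in. apply NoDup_nodup. apply nodup_In. apply in_map; auto. Qed.

Lemma dev_eq D p j n m : dev D p j n m =
  rsum (domain D) (fun a => Rabs (p a - m) * poi (INR n * p a) j).
Proof. unfold dev. rewrite <- (regroup D p (fun x => Rabs (x - m) * poi (INR n * x) j)). apply rsum_ext; intros; ring. Qed.

Lemma Bpoi_eq D p n j k : B_poi D p n j k =
  rsum (domain D) (fun a => if in_bucketb n k (p a) then poi (INR n * p a) j else 0).
Proof. unfold B_poi. rewrite rsum_filter, <- (regroup D p (fun x => if in_bucketb n k x then poi (INR n * x) j else 0)). apply rsum_ext; intros.
  destruct (in_bucketb n k x); ring. Qed.

Lemma BS_eq D p S n j k : INR (B_S D p S n j k) =
  rsum (domain D) (fun a => if in_bucketb n k (p a) then (if Nat.eqb (occ S a) j then 1 else 0) else 0).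
Proof. unfold B_S. rewrite length_filter_rsum. apply rsum_ext; intros.
  destruct (in_bucketb n k (p x)), (Nat.eqb (occ S x) j); reflexivity. Qed.

Lemma toterr_eq D p S n m : total_error D p S n m =
  rsum (js n) (fun j => rsum (domain D) (fun a => if Nat.eqb (occ S a) j then Rabs (p a - m j) else 0)).
Proof. unfold total_error. apply rsum_ext; intros. apply rsum_filter. Qed.

Lemma exp_partial x N : 0 <= x -> sum_f_R0 (fun i => / INR (fact i) * x ^ i) N <= exp x.
Proof. intros Hx. unfold exp. destruct (exist_exp x) as [l Hl]; simpl.
  apply sum_incr. exact Hl. intros i. apply Rmult_le_pos.
  apply Rlt_le, Rinv_0_lt_compat, INR_fact_lt_0. apply pow_le; auto. Qed.

Lemma term_le_exp x j : 0 <= x -> x ^ j / INR (fact j) <= exp x.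
Proof. intros Hx. eapply Rle_trans; [|apply (exp_partial x j Hx)].
  destruct j. simpl; unfold Rdiv; rewrite Rinv_1; lra.
  change (sum_f_R0 ?f (S j)) with (sum_f_R0 f j + f (S j)). cbv beta.
  assert (0 <= sum_f_R0 (fun i => / INR (fact i) * x ^ i) j).
  { apply cond_pos_sum; intros i. apply Rmult_le_pos.
    apply Rlt_le, Rinv_0_lt_compat, INR_fact_lt_0. apply pow_le; auto. }
  assert (x ^ S j / INR (fact (S j)) = / INR (fact (S j)) * x ^ S j) by (unfold Rdiv; ring). lra. Qed.

Lemma rsum_sum_f f N : rsum (seq 0 (S N)) f = sum_f_R0 f N.
Proof. induction N. unfold rsum; simpl; ring.
  rewrite seq_S, rsum_app, IHN. simpl. unfold rsum; simpl. ring. Qed.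

Lemma rsum_map {A B} (g : A -> B) l f : rsum (map g l) f = rsum l (fun x => f (g x)).
Proof. induction l; [reflexivity|]. simpl map. rewrite !rsum_cons, IHl; reflexivity. Qed.

Lemma poi_nonneg x j : 0 <= x -> 0 <= poi x j.
Proof. intros Hx. unfold poi. apply Rmult_le_pos. apply Rmult_le_pos.
  apply Rlt_le, exp_pos. apply pow_le; auto. apply Rlt_le, Rinv_0_lt_compat, INR_fact_lt_0. Qed.

Lemma poi_zero j : (1 <= j)%nat -> poi 0 j = 0.
Proof. intros H. unfold poi. rewrite pow_i by lia. unfold Rdiv; ring. Qed.

Lemma poi_sum_le x N : 0 <= x -> rsum (seq 1 N) (fun j => poi x j) <= x.
Proof. intros Hx. destruct N. unfold rsum; simpl; lra.
  rewrite <- seq_shift, rsum_map.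
  apply Rle_trans with (rsum (seq 0 (S N)) (fun i => x * exp (- x) * (/ INR (fact i) * x ^ i))).
  - apply rsum_le; intros i _. unfold poi. simpl pow. rewrite fact_simpl, mult_INR.
    assert (0 < INR (fact i)) by apply INR_fact_lt_0.
    assert (1 <= INR (S i)) by (rewrite S_INR; pose proof (pos_INR i); lra).
    assert (0 <= x ^ i) by (apply pow_le; auto). pose proof (exp_pos (-x)).
    replace (exp (- x) * (x * x ^ i) / (INR (S i) * INR (fact i))) with
      ((x * exp (- x) * (/ INR (fact i) * x ^ i)) * / INR (S i)) by (field; lra).
    assert (0 <= x * exp (- x) * (/ INR (fact i) * x ^ i)).
    { apply Rmult_le_pos; [apply Rmult_le_pos; lra|]. apply Rmult_le_pos; auto.
      apply Rlt_le, Rinv_0_lt_compat; lra. }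
    assert (/ INR (S i) <= 1) by (rewrite <- Rinv_1; apply Rinv_le_contravar; lra).
    assert (0 <= / INR (S i)) by (apply Rlt_le, Rinv_0_lt_compat; lra).
    nra.
  - rewrite rsum_scal, rsum_sum_f.
    pose proof (exp_partial x N Hx). pose proof (exp_pos (-x)).
    apply Rle_trans with (x * exp (- x) * exp x).
    apply Rmult_le_compat_l; [apply Rmult_le_pos; lra|auto].
    rewrite Rmult_assoc, <- exp_plus. replace (-x + x) with 0 by ring. rewrite exp_0; lra. Qed.

Lemma poi_tail x j : 0 <= x -> poi x j <= 2 ^ j * exp (- (x / 2)).
Proof. intros Hx. unfold poi. pose proof (term_le_exp (x/2) j ltac:(lra)).
  replace (exp (-x) * x ^ j / INR (fact j)) with (2 ^ j * ((x/2) ^ j / INR (fact j)) * exp (-x)).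
  2:{ assert (Hx2 : x ^ j = 2 ^ j * (x / 2) ^ j) by (rewrite <- Rpow_mult_distr; f_equal; field).
      rewrite Hx2. field. pose proof (INR_fact_lt_0 j); lra. }
  replace (exp (-(x/2))) with (exp (x/2) * exp (-x)).
  2:{ rewrite <- exp_plus. f_equal; field. }
  rewrite <- Rmult_assoc. apply Rmult_le_compat_r. apply Rlt_le, exp_pos.
  apply Rmult_le_compat_l; auto. apply pow_le; lra. Qed.

Lemma pow2_le_exp j : 2 ^ j <= exp (INR j).
Proof. induction j. simpl; rewrite exp_0; lra.
  rewrite S_INR, exp_plus. simpl pow. pose proof (exp_ineq1 1 ltac:(lra)).
  rewrite Rmult_comm. apply Rmult_le_compat; try lra. apply pow_le; lra. Qed.

Definition Qn (n : nat) := INR n * (ln (INR n)) ^ 2.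

Lemma bucket_tel n K x : 0 < Qn n ->
  rsum (seq 0 K) (fun k => if in_bucketb n k x then 1 else 0) =
  if Rlt_dec 0 x then if Rle_dec x (INR K / Qn n) then 1 else 0 else 0.
Proof. intros HQ. unfold Qn in *. induction K.
  - simpl seq. rewrite rsum_nil. simpl INR. destruct (Rlt_dec 0 x); auto.
    destruct (Rle_dec x (0 / _)); auto. unfold Rdiv in r0; rewrite Rmult_0_l in r0; lra.
  - rewrite seq_S, rsum_app, IHK. simpl (0 + K)%nat. rewrite rsum_cons, rsum_nil.
    unfold in_bucketb.
    assert (0 <= INR K / (INR n * ln (INR n) ^ 2)) by (unfold Rdiv; apply Rmult_le_pos; [apply pos_INR|apply Rlt_le, Rinv_0_lt_compat; lra]).
    assert (INR K / (INR n * ln (INR n) ^ 2) <= INR (S K) / (INR n * ln (INR n) ^ 2)).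
    { unfold Rdiv. apply Rmult_le_compat_r. apply Rlt_le, Rinv_0_lt_compat; lra.
      rewrite S_INR; lra. }
    repeat match goal with |- context [Rlt_dec ?a ?b] => destruct (Rlt_dec a b)
      | |- context [Rle_dec ?a ?b] => destruct (Rle_dec a b) end; lra. Qed.

Lemma bucket_prop n k x : 0 < Qn n -> in_bucketb n k x = true ->
  INR (S k) / Qn n - / Qn n < x <= INR (S k) / Qn n.
Proof. intros HQ H. unfold in_bucketb, Qn in *.
  repeat match goal with H : context [Rlt_dec ?a ?b] |- _ => destruct (Rlt_dec a b)
      | H : context [Rle_dec ?a ?b] |- _ => destruct (Rle_dec a b) end; try discriminate.
  set (Q := INR n * ln (INR n) ^ 2) in *.
  replace (INR (S k) / Q - / Q) with (INR k / Q) by (rewrite S_INR; field; lra). lra. Qed.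

Lemma exp_le_mono x y : x <= y -> exp x <= exp y.
Proof. intros [H|H]. left; apply exp_increasing; auto. subst; lra. Qed.

Lemma K0Q n K0 : 1 <= ln (INR n) -> 0 < INR n -> 6 * (ln (INR n) ^ 2) ^ 2 <= INR K0 ->
  6 * ln (INR n) ^ 2 / INR n <= INR K0 / Qn n.
Proof. intros Hl Hn HK. unfold Qn. set (l := ln (INR n)) in *.
  assert (1 <= l ^ 2) by nra.
  replace (6 * l ^ 2 / INR n) with (6 * (l^2)^2 / (INR n * l ^ 2)) by (field; split; lra).
  unfold Rdiv. apply Rmult_le_compat_r; auto. apply Rlt_le, Rinv_0_lt_compat. nra. Qed.

Lemma Rpow15_le l : 1 <= l -> Rpower l 1.5 <= l ^ 2.
Proof. intros Hl. replace (l ^ 2) with (Rpower l (INR 2)) by (apply Rpower_pow; lra).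
  apply Rle_Rpower; auto. simpl; lra. Qed.

Lemma occ_small D p n S a j K0 :
  1 <= ln (INR n) -> 0 < INR n -> 6 * (ln (INR n) ^ 2) ^ 2 <= INR K0 ->
  (a < D)%nat -> occ S a = j -> INR j < ln (INR n) ^ 2 ->
  (forall a, (a < D)%nat ->
     Rabs (INR n * p a - INR (occ S a)) <
       Rmax (Rpower (ln (INR n)) 1.5) (sqrt (INR n * p a * Rpower (ln (INR n)) 1.5))) ->
  p a <= INR K0 / Qn n.
Proof. intros Hl Hn HK Ha Ho Hj Hf. pose proof (K0Q n K0 Hl Hn HK) as HQ.
  destruct (Rle_dec (p a) (INR K0 / Qn n)) as [|Hc]; auto. exfalso.
  specialize (Hf a Ha). rewrite Ho in Hf. set (l := ln (INR n)) in *.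
  pose proof (Rpow15_le l Hl). assert (1 <= l ^ 2) by nra.
  set (lam := INR n * p a) in *.
  assert (Hlam : 6 * l ^ 2 < lam).
  { unfold lam. assert (6 * l ^ 2 / INR n < p a) by lra.
    apply Rmult_lt_compat_l with (r := INR n) in H1; auto.
    replace (INR n * (6 * l ^ 2 / INR n)) with (6 * l ^ 2) in H1 by (field; lra). lra. }
  assert (0 <= Rpower l 1.5) by (unfold Rpower; apply Rlt_le, exp_pos).
  assert (Hsq : sqrt (lam * Rpower l 1.5) <= 5 / 6 * lam).
  { rewrite <- (sqrt_square (5/6*lam)) by lra. apply sqrt_le_1_alt. nra. }
  assert (Rmax (Rpower l 1.5) (sqrt (lam * Rpower l 1.5)) <= 5/6 * lam).
  { apply Rmax_lub; lra. }
  rewrite Rabs_right in Hf by lra. lra. Qed.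

Lemma exp_m2l n : 0 < INR n -> exp (- (2 * ln (INR n))) = / (INR n ^ 2).
Proof. intros Hn. rewrite exp_Ropp. f_equal. replace (2 * ln (INR n)) with (ln (INR n) + ln (INR n)) by ring.
  rewrite exp_plus, exp_ln; auto. ring. Qed.

Lemma tail_bound n j (x mm : R) K0 :
  1 <= ln (INR n) -> 0 < INR n -> 6 * (ln (INR n) ^ 2) ^ 2 <= INR K0 ->
  (1 <= j)%nat -> INR j < ln (INR n) ^ 2 -> 0 <= mm <= 1 -> 0 <= x <= 1 ->
  ~ (0 < x /\ x <= INR K0 / Qn n) ->
  Rabs (x - mm) * poi (INR n * x) j <= x / INR n.
Proof. intros Hl Hn HK Hj1 Hj Hm Hx Hnot. pose proof (K0Q n K0 Hl Hn HK) as HQ.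
  destruct (Req_dec x 0) as [->|Hx0].
  { rewrite Rmult_0_r, poi_zero by auto. unfold Rdiv; lra. }
  assert (Hxb : INR K0 / Qn n < x) by (destruct (Rle_dec x (INR K0 / Qn n)); [exfalso; apply Hnot; split; lra|lra]).
  set (l := ln (INR n)) in *. assert (1 <= l ^ 2) by nra.
  set (lam := INR n * x).
  assert (Hlam : 6 * l ^ 2 < lam).
  { unfold lam. assert (6 * l ^ 2 / INR n < x) by lra.
    apply Rmult_lt_compat_l with (r := INR n) in H0; auto.
    replace (INR n * (6 * l ^ 2 / INR n)) with (6 * l ^ 2) in H0 by (field; lra). lra. }
  assert (Hp : poi lam j <= / (INR n ^ 2)).
  { eapply Rle_trans. apply poi_tail. lra.
    eapply Rle_trans. apply Rmult_le_compat_r. apply Rlt_le, exp_pos. apply pow2_le_exp.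
    rewrite <- exp_plus, <- exp_m2l by auto. apply exp_le_mono. fold l. nra. }
  assert (Habs : Rabs (x - mm) <= 1) by (apply Rabs_le; lra).
  pose proof (poi_nonneg lam j ltac:(unfold lam; nra)).
  assert (/ INR n ^ 2 <= x / INR n).
  { assert (1 / INR n <= x).
    { apply Rle_trans with (6 * l ^ 2 / INR n); [|lra]. unfold Rdiv.
      apply Rmult_le_compat_r. apply Rlt_le, Rinv_0_lt_compat; lra. lra. }
    replace (/ INR n ^ 2) with ((1 / INR n) / INR n) by (field; lra).
    unfold Rdiv. apply Rmult_le_compat_r. apply Rlt_le, Rinv_0_lt_compat; lra. lra. }
  apply Rle_trans with (1 * / INR n ^ 2); [|lra].
  apply Rmult_le_compat; auto. apply Rabs_pos. Qed.

Lemma rsum_scal_r {A} (l : list A) c f : rsum l (fun x => f x * c) = rsum l f * c.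
Proof. rewrite Rmult_comm, <- rsum_scal. apply rsum_ext; intros; ring. Qed.

Lemma rsum_zero {A} (l : list A) f : (forall x, In x l -> f x = 0) -> rsum l f = 0.
Proof. intros H. rewrite (rsum_ext _ _ (fun _ => 0)) by auto. rewrite rsum_const; ring. Qed.

Lemma tel_one n K0 x : 0 < Qn n -> 0 < x <= INR K0 / Qn n ->
  rsum (seq 0 K0) (fun k => if in_bucketb n k x then 1 else 0) = 1.
Proof. intros HQ [H1 H2]. rewrite bucket_tel by auto.
  destruct (Rlt_dec 0 x); [|lra]. destruct (Rle_dec x _); lra. Qed.

Lemma tel_zero n K0 x : 0 < Qn n -> ~ (0 < x /\ x <= INR K0 / Qn n) ->
  rsum (seq 0 K0) (fun k => if in_bucketb n k x then 1 else 0) = 0.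
Proof. intros HQ H. rewrite bucket_tel by auto.
  destruct (Rlt_dec 0 x); auto. destruct (Rle_dec x _); auto. exfalso; auto. Qed.

Lemma tel_le1 n K0 x : 0 < Qn n ->
  rsum (seq 0 K0) (fun k => if in_bucketb n k x then 1 else 0) <= 1.
Proof. intros HQ. rewrite bucket_tel by auto.
  destruct (Rlt_dec 0 x); [destruct (Rle_dec x _)|]; lra. Qed.

Lemma bucket_close n k x mm : 0 < Qn n -> in_bucketb n k x = true ->
  Rabs (Rabs (x - mm) - Rabs (INR (S k) / Qn n - mm)) <= / Qn n.
Proof. intros HQ Hb. pose proof (bucket_prop n k x HQ Hb).
  eapply Rle_trans. apply Rabs_triang_inv2.
  replace (x - mm - (INR (S k) / Qn n - mm)) with (x - INR (S k) / Qn n) by ring.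
  apply Rabs_le; lra. Qed.

Lemma part_E D p n Sm j mm K0 : 0 < Qn n ->
  (forall a, In a (domain D) -> occ Sm a = j -> 0 < p a <= INR K0 / Qn n) ->
  Rabs (rsum (domain D) (fun a => if Nat.eqb (occ Sm a) j then Rabs (p a - mm) else 0)
       - rsum (seq 0 K0) (fun k => INR (B_S D p Sm n j k) * Rabs (INR (S k) / Qn n - mm)))
   <= / Qn n * rsum (domain D) (fun a => if Nat.eqb (occ Sm a) j then 1 else 0).
Proof. intros HQ Hin.
  rewrite (rsum_ext (seq 0 K0) _ (fun k => rsum (domain D) (fun a =>
     (if in_bucketb n k (p a) then (if Nat.eqb (occ Sm a) j then 1 else 0) else 0)
       * Rabs (INR (S k) / Qn n - mm)))).
  2:{ intros k _. rewrite BS_eq, rsum_scal_r. reflexivity. }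
  rewrite <- rsum_swap, <- rsum_minus, <- rsum_scal.
  eapply Rle_trans; [apply rsum_abs|]. apply rsum_le. intros a Ha.
  destruct (Nat.eqb (occ Sm a) j) eqn:Ho.
  - apply Nat.eqb_eq in Ho. pose proof (tel_one n K0 (p a) HQ (Hin a Ha Ho)) as T.
    assert (E1 : Rabs (p a - mm) = rsum (seq 0 K0) (fun k =>
      (if in_bucketb n k (p a) then 1 else 0) * Rabs (p a - mm))) by (rewrite rsum_scal_r, T; ring).
    assert (E2 : / Qn n * 1 = rsum (seq 0 K0) (fun k =>
      (if in_bucketb n k (p a) then 1 else 0) * / Qn n)) by (rewrite rsum_scal_r, T; ring).
    rewrite E1, E2, <- rsum_minus.
    eapply Rle_trans; [apply rsum_abs|].
    apply rsum_le. intros k Hk. destruct (in_bucketb n k (p a)) eqn:Hb.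
    + pose proof (bucket_close n k (p a) mm HQ Hb).
      replace (1 * Rabs (p a - mm) - 1 * Rabs (INR (S k) / Qn n - mm)) with
        (Rabs (p a - mm) - Rabs (INR (S k) / Qn n - mm)) by ring. lra.
    + replace (0 * Rabs (p a - mm) - 0 * Rabs (INR (S k) / Qn n - mm)) with 0 by ring.
      rewrite Rabs_R0; lra.
  - rewrite rsum_zero. rewrite Rminus_0_r, Rabs_R0; lra.
    intros k _. destruct (in_bucketb n k (p a)); ring. Qed.

Lemma bucket_range n k K0 x : 0 < Qn n -> In k (seq 0 K0) -> in_bucketb n k x = true ->
  0 < x <= INR K0 / Qn n.
Proof. intros HQ Hk Hb. apply in_seq in Hk. pose proof (bucket_prop n k x HQ Hb).
  assert (INR (S k) <= INR K0) by (apply le_INR; lia).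
  assert (INR (S k) / Qn n - / Qn n = INR k / Qn n) by (rewrite S_INR; field; lra).
  assert (0 <= INR k / Qn n) by (unfold Rdiv; apply Rmult_le_pos; [apply pos_INR|apply Rlt_le, Rinv_0_lt_compat; lra]).
  assert (INR (S k) / Qn n <= INR K0 / Qn n) by (unfold Rdiv; apply Rmult_le_compat_r; [apply Rlt_le, Rinv_0_lt_compat; lra|auto]).
  lra. Qed.

Lemma part_D D p n j mm K0 : 0 < Qn n -> 0 < INR n ->
  (forall a, In a (domain D) -> 0 <= p a) ->
  (forall a, In a (domain D) -> ~ (0 < p a /\ p a <= INR K0 / Qn n) ->
      Rabs (p a - mm) * poi (INR n * p a) j <= p a / INR n) ->
  Rabs (rsum (domain D) (fun a => Rabs (p a - mm) * poi (INR n * p a) j)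
       - rsum (seq 0 K0) (fun k => B_poi D p n j k * Rabs (INR (S k) / Qn n - mm)))
   <= / Qn n * rsum (domain D) (fun a => poi (INR n * p a) j) + rsum (domain D) (fun a => p a / INR n).
Proof. intros HQ Hn Hpos Htail.
  rewrite (rsum_ext (seq 0 K0) _ (fun k => rsum (domain D) (fun a =>
     (if in_bucketb n k (p a) then 1 else 0) * (poi (INR n * p a) j * Rabs (INR (S k) / Qn n - mm))))).
  2:{ intros k _. rewrite Bpoi_eq, <- rsum_scal_r. apply rsum_ext; intros a _.
      destruct (in_bucketb n k (p a)); ring. }
  rewrite <- rsum_swap, <- rsum_minus, <- rsum_scal, <- rsum_plus.
  eapply Rle_trans; [apply rsum_abs|]. apply rsum_le. intros a Ha.
  pose proof (Hpos a Ha). assert (0 <= p a / INR n) by (unfold Rdiv; apply Rmult_le_pos; [lra|apply Rlt_le, Rinv_0_lt_compat; lra]).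
  pose proof (poi_nonneg (INR n * p a) j ltac:(nra)).
  assert (0 < / Qn n) by (apply Rinv_0_lt_compat; lra).
  assert (Hdec : (0 < p a /\ p a <= INR K0 / Qn n) \/ ~ (0 < p a /\ p a <= INR K0 / Qn n)).
  { destruct (Rlt_dec 0 (p a)); destruct (Rle_dec (p a) (INR K0 / Qn n));
      [left; auto|right; intros []; auto|right; intros []; auto|right; intros []; auto]. }
  destruct Hdec as [Hr|Hr].
  - pose proof (tel_one n K0 (p a) HQ Hr) as T.
    assert (E1 : Rabs (p a - mm) * poi (INR n * p a) j = rsum (seq 0 K0) (fun k =>
      (if in_bucketb n k (p a) then 1 else 0) * (poi (INR n * p a) j * Rabs (p a - mm)))) by (rewrite rsum_scal_r, T; ring).
    rewrite E1, <- rsum_minus.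
    eapply Rle_trans; [apply rsum_abs|].
    apply Rle_trans with (/ Qn n * poi (INR n * p a) j); [|lra].
    assert (E2 : / Qn n * poi (INR n * p a) j = rsum (seq 0 K0) (fun k =>
      (if in_bucketb n k (p a) then 1 else 0) * (poi (INR n * p a) j * / Qn n))) by (rewrite rsum_scal_r, T; ring).
    rewrite E2. apply rsum_le. intros k Hk. destruct (in_bucketb n k (p a)) eqn:Hb.
    + pose proof (bucket_close n k (p a) mm HQ Hb).
      replace (1 * (poi (INR n * p a) j * Rabs (p a - mm)) - 1 * (poi (INR n * p a) j * Rabs (INR (S k) / Qn n - mm)))
        with (poi (INR n * p a) j * (Rabs (p a - mm) - Rabs (INR (S k) / Qn n - mm))) by ring.
      rewrite Rabs_mult, Rabs_right by lra. rewrite Rmult_1_l. apply Rmult_le_compat_l; lra.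
    + replace (0 * (poi (INR n * p a) j * Rabs (p a - mm)) - 0 * (poi (INR n * p a) j * Rabs (INR (S k) / Qn n - mm))) with 0 by ring.
      rewrite Rabs_R0. lra.
  - rewrite rsum_zero. rewrite Rminus_0_r. rewrite Rabs_right.
    + pose proof (Htail a Ha Hr). nra.
    + apply Rle_ge, Rmult_le_pos; auto. apply Rabs_pos.
    + intros k Hk. destruct (in_bucketb n k (p a)) eqn:Hb; [|ring].
      exfalso; apply Hr; apply (bucket_range n k K0); auto. Qed.

Lemma part_M D p n Sm j mm K0 : 0 < Qn n -> 0 <= mm ->
  (forall k, Rabs (B_poi D p n j k - INR (B_S D p Sm n j k)) < Rpower (INR n) 0.6) ->
  Rabs (rsum (seq 0 K0) (fun k => INR (B_S D p Sm n j k) * Rabs (INR (S k) / Qn n - mm))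
      - rsum (seq 0 K0) (fun k => B_poi D p n j k * Rabs (INR (S k) / Qn n - mm)))
  <= INR K0 * (Rpower (INR n) 0.6 * (INR K0 / Qn n + mm)).
Proof. intros HQ Hm HB. rewrite <- rsum_minus. eapply Rle_trans; [apply rsum_abs|].
  rewrite <- (length_seq K0 0) at 2. rewrite <- rsum_const. apply rsum_le. intros k Hk.
  apply in_seq in Hk.
  replace (INR (B_S D p Sm n j k) * Rabs (INR (S k) / Qn n - mm) - B_poi D p n j k * Rabs (INR (S k) / Qn n - mm))
    with (- (B_poi D p n j k - INR (B_S D p Sm n j k)) * Rabs (INR (S k) / Qn n - mm)) by ring.
  rewrite Rabs_mult, Rabs_Ropp, Rabs_Rabsolu. apply Rmult_le_compat; try apply Rabs_pos.
  left; apply HB.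
  assert (INR (S k) <= INR K0) by (apply le_INR; lia).
  assert (0 <= INR (S k) / Qn n) by (unfold Rdiv; apply Rmult_le_pos; [apply pos_INR|apply Rlt_le, Rinv_0_lt_compat; lra]).
  assert (INR (S k) / Qn n <= INR K0 / Qn n) by (unfold Rdiv; apply Rmult_le_compat_r; [apply Rlt_le, Rinv_0_lt_compat; lra|auto]).
  apply Rabs_le; lra. Qed.

Lemma ind_nodup_le1 (l : list nat) c : NoDup l ->
  rsum l (fun j => if Nat.eqb c j then 1 else 0) <= 1.
Proof. induction l; intros H. unfold rsum; simpl; lra. inversion H; subst.
  rewrite rsum_cons. destruct (Nat.eqb c a) eqn:E.
  - apply Nat.eqb_eq in E; subst. rewrite rsum_zero; [lra|].
    intros x Hx. destruct (Nat.eqb a x) eqn:E'; auto. apply Nat.eqb_eq in E'; subst; contradiction.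
  - specialize (IHl H3); lra. Qed.

Lemma ind_sum_le_occ (l : list nat) c : NoDup l -> (forall j, In j l -> (1 <= j)%nat) ->
  rsum l (fun j => if Nat.eqb c j then 1 else 0) <= INR c.
Proof. intros H1 H2. destruct c.
  - rewrite rsum_zero; [simpl; lra|]. intros x Hx. specialize (H2 x Hx).
    destruct (Nat.eqb 0 x) eqn:E; auto. apply Nat.eqb_eq in E; lia.
  - eapply Rle_trans; [apply ind_nodup_le1; auto|]. rewrite S_INR; pose proof (pos_INR c); lra. Qed.

Lemma count_sum_le (dom : list nat) (Sm : list nat) : NoDup dom ->
  rsum dom (fun a => INR (count_occ Nat.eq_dec Sm a)) <= INR (length Sm).
Proof. intros Hd. induction Sm.
  - rewrite rsum_zero; [simpl; lra|]. intros; reflexivity.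
  - simpl length. rewrite S_INR.
    rewrite (rsum_ext _ _ (fun x => INR (count_occ Nat.eq_dec Sm x) + (if Nat.eqb a x then 1 else 0))).
    + rewrite rsum_plus. pose proof (ind_nodup_le1 dom a Hd). lra.
    + intros x _. simpl count_occ. destruct (Nat.eq_dec a x) as [E|E].
      * subst. rewrite Nat.eqb_refl, S_INR; ring.
      * destruct (Nat.eqb a x) eqn:E'; [apply Nat.eqb_eq in E'; contradiction|ring]. Qed.

Lemma js_prop n j : In j (js n) -> (1 <= j)%nat /\ INR j < ln (INR n) ^ 2.
Proof. unfold js. intros H. apply filter_In in H. destruct H as [H1 H2]. apply in_seq in H1.
  split; [lia|]. destruct (Rlt_dec (INR j) (ln (INR n) ^ 2)); auto; discriminate. Qed.

Lemma js_nodup n : NoDup (js n).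
Proof. unfold js. apply NoDup_filter, seq_NoDup. Qed.

Lemma js_length n : INR (length (js n)) <= ln (INR n) ^ 2 + 1.
Proof. unfold js. eapply Rle_trans. apply le_INR, filter_length_le. rewrite length_seq.
  pose proof (archimed (ln (INR n) ^ 2)) as [H1 H2].
  assert (0 <= ln (INR n) ^ 2) by (apply pow2_ge_0).
  rewrite INR_IZR_INZ, Z2Nat.id. lra. apply le_IZR. lra. Qed.

Lemma js_poi n x : 0 <= x -> rsum (js n) (fun j => poi x j) <= x.
Proof. intros Hx. unfold js. eapply Rle_trans. apply rsum_le_filter.
  intros; apply poi_nonneg; auto. apply poi_sum_le; auto. Qed.

Definition eps_fn (n : nat) : R :=
  2 / ln (INR n) ^ 2 + 128 * (ln (INR n) ^ 2) ^ 4 / Rpower (INR n) 0.4.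

Lemma inv_nonneg x : 0 <= x -> 0 <= / x.
Proof. intros [H|H]. left; apply Rinv_0_lt_compat; auto. subst; rewrite Rinv_0; lra. Qed.

Lemma eps_nonneg n : 0 <= eps_fn n.
Proof. unfold eps_fn, Rdiv. apply Rplus_le_le_0_compat; apply Rmult_le_pos.
  lra. apply inv_nonneg, pow2_ge_0. apply Rmult_le_pos; [lra|]. apply pow_le, pow2_ge_0.
  apply inv_nonneg. unfold Rpower; apply Rlt_le, exp_pos. Qed.

Lemma exp_mult_nat k x : exp (INR k * x) = exp x ^ k.
Proof. induction k. simpl; rewrite Rmult_0_l, exp_0; auto.
  rewrite S_INR, Rmult_plus_distr_r, exp_plus, IHk, Rmult_1_l. simpl; ring. Qed.

Lemma pow_lt_mono x y k : 0 <= x < y -> (0 < k)%nat -> x ^ k < y ^ k.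
Proof. intros H Hk. induction k. lia. destruct k. simpl; lra.
  simpl pow. simpl pow in IHk. apply Rmult_le_0_lt_compat; try lra.
  apply Rmult_le_pos; [lra|apply pow_le; lra]. apply IHk; lia. Qed.

Lemma eps_cv : Un_cv eps_fn 0.
Proof. intros e He.
  set (M := 256 * 40 ^ 8 / e).
  assert (HM : 0 < M) by (unfold M; apply Rdiv_lt_0_compat; [nra|lra]).
  set (T := 4 / e + 1 + 5 * Rabs (ln M) + 1).
  exists (Z.to_nat (up (exp T))). intros n Hn.
  assert (HnT : exp T < INR n).
  { pose proof (archimed (exp T)) as [H1 _]. apply le_INR in Hn.
    rewrite INR_IZR_INZ, Z2Nat.id in Hn. lra. apply le_IZR. pose proof (exp_pos T). lra. }
  assert (Hnpos : 0 < INR n) by (pose proof (exp_pos T); lra).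
  assert (Hl : T < ln (INR n)) by (rewrite <- (ln_exp T); apply ln_increasing; auto; apply exp_pos).
  set (l := ln (INR n)) in *.
  assert (HT1 : 4 / e < T) by (unfold T; pose proof (Rabs_pos (ln M)); lra).
  assert (4 / e > 0) by (apply Rdiv_lt_0_compat; lra).
  unfold Rdist, eps_fn. fold l. rewrite Rminus_0_r, Rabs_right by (apply Rle_ge, eps_nonneg).
  assert (Ht1 : 2 / l ^ 2 < e / 2).
  { assert (1 <= l) by (unfold T in Hl; pose proof (Rabs_pos (ln M)); lra).
    assert (l <= l ^ 2) by nra.
    apply Rlt_le_trans with (2 / (4 / e)). unfold Rdiv. apply Rmult_lt_compat_l; [lra|].
    apply Rinv_lt_contravar. nra. lra. right; field; lra. }
  set (r := exp (0.2 * l)).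
  assert (Hr0 : 0 < r) by apply exp_pos.
  assert (Hpw : Rpower (INR n) 0.4 = r * r).
  { unfold Rpower, r. fold l. rewrite <- exp_plus. f_equal. lra. }
  assert (HrM : M < r).
  { unfold r. rewrite <- (exp_ln M) by auto. apply exp_increasing.
    pose proof (Rle_abs (ln M)). unfold T in Hl. lra. }
  assert (Hs : l / 40 < exp (l / 40)).
  { assert (0 < l / 40) by (unfold T in Hl; pose proof (Rabs_pos (ln M)); lra).
    pose proof (exp_ineq1 (l / 40) ltac:(lra)). lra. }
  assert (Hs8 : exp (l / 40) ^ 8 = r).
  { rewrite <- exp_mult_nat. unfold r. f_equal. simpl; lra. }
  assert (Hl8 : l ^ 8 < 40 ^ 8 * r).
  { rewrite <- Hs8, <- Rpow_mult_distr. apply pow_lt_mono; [|lia].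
    assert (0 < l / 40) by (unfold T in Hl; pose proof (Rabs_pos (ln M)); lra). lra. }
  assert (Ht2 : 128 * (l ^ 2) ^ 4 / Rpower (INR n) 0.4 < e / 2).
  { rewrite Hpw. replace ((l ^ 2) ^ 4) with (l ^ 8) by ring.
    apply Rlt_le_trans with (128 * (40 ^ 8 * r) / (r * r)).
    unfold Rdiv. apply Rmult_lt_compat_r. apply Rinv_0_lt_compat; nra. lra.
    replace (128 * (40 ^ 8 * r) / (r * r)) with (128 * 40 ^ 8 / r) by (field; lra).
    apply Rle_trans with (128 * 40 ^ 8 / M).
    unfold Rdiv. apply Rmult_le_compat_l. nra. left; apply Rinv_lt_contravar; nra.
    unfold M. right. field. lra. }
  lra. Qed.

Lemma final_arith n K0 : 1 <= ln (INR n) -> 0 < INR n ->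
  6 * (ln (INR n) ^ 2) ^ 2 <= INR K0 <= 6 * (ln (INR n) ^ 2) ^ 2 + 1 ->
  / Qn n * INR n + / Qn n * INR n + (ln (INR n) ^ 2 + 1) * (1 / INR n + INR K0 *
     (Rpower (INR n) 0.6 * (INR K0 / Qn n + 2 / INR n * ln (INR n) ^ 2))) <= eps_fn n.
Proof. intros Hl Hn HK. unfold eps_fn, Qn in *. set (l := ln (INR n)) in *.
  set (L := l ^ 2) in *. assert (HL : 1 <= L) by (unfold L; nra).
  assert (Hn1 : 1 <= INR n).
  { destruct (Rle_dec 1 (INR n)); auto. exfalso. assert (l < 0).
    { unfold l; rewrite <- ln_1. apply ln_increasing; lra. } lra. }
  set (r := Rpower (INR n) 0.4). set (s := Rpower (INR n) 0.6).
  assert (Hrs : r * s = INR n).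
  { unfold r, s. rewrite <- Rpower_plus. replace (0.4 + 0.6) with 1 by lra. apply Rpower_1; lra. }
  assert (Hr1 : 1 <= r).
  { unfold r. rewrite <- (Rpower_O (INR n)) by lra. apply Rle_Rpower; lra. }
  assert (Hrn : r <= INR n).
  { unfold r. rewrite <- (Rpower_1 (INR n)) at 2 by lra. apply Rle_Rpower; lra. }
  assert (Hs0 : 0 < s) by (unfold s, Rpower; apply exp_pos).
  set (u := / INR n). assert (Hu : 0 < u) by (apply Rinv_0_lt_compat; lra).
  assert (Hsu : s * u = / r) by (unfold u; rewrite <- Hrs; field; lra).
  assert (HQ1 : / (INR n * L) * INR n = 1 / L) by (field; lra).
  rewrite HQ1.
  assert (HKQ : INR K0 / (INR n * L) <= 7 * L * u).
  { replace (INR K0 / (INR n * L)) with (INR K0 * u / L) by (unfold u; field; lra).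
    apply Rle_trans with (7 * L ^ 2 * u / L).
    unfold Rdiv. apply Rmult_le_compat_r. apply Rlt_le, Rinv_0_lt_compat; lra.
    apply Rmult_le_compat_r; nra. right; field; lra. }
  assert (HK7 : INR K0 <= 7 * L ^ 2) by nra.
  assert (HA : INR K0 / (INR n * L) + 2 / INR n * L <= 9 * L * u).
  { replace (2 / INR n * L) with (2 * L * u) by (unfold u; field; lra). lra. }
  assert (HB : INR K0 * (s * (INR K0 / (INR n * L) + 2 / INR n * L)) <= 63 * L ^ 3 / r).
  { assert (HX : 0 <= INR K0 / (INR n * L) + 2 / INR n * L).
    { apply Rplus_le_le_0_compat.
      unfold Rdiv; apply Rmult_le_pos; [apply pos_INR|apply Rlt_le, Rinv_0_lt_compat; nra].
      unfold Rdiv; apply Rmult_le_pos; [apply Rmult_le_pos; [lra|apply Rlt_le, Rinv_0_lt_compat; lra]|lra]. }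
    apply Rle_trans with (7 * L ^ 2 * (s * (9 * L * u))).
    apply Rmult_le_compat. apply pos_INR. apply Rmult_le_pos; lra. auto.
    apply Rmult_le_compat_l; lra.
    right. replace (7 * L ^ 2 * (s * (9 * L * u))) with (63 * L ^ 3 * (s * u)) by ring.
    rewrite Hsu. field. lra. }
  assert (Hu1 : 1 / INR n <= L ^ 3 / r).
  { apply Rle_trans with (1 / r). unfold Rdiv. apply Rmult_le_compat_l; [lra|].
    apply Rinv_le_contravar; lra. unfold Rdiv. apply Rmult_le_compat_r.
    apply Rlt_le, Rinv_0_lt_compat; lra. nra. }
  assert (H64 : 1 / INR n + INR K0 * (s * (INR K0 / (INR n * L) + 2 / INR n * L)) <= 64 * L ^ 3 / r).
  { unfold Rdiv in *. lra. }
  assert (0 <= 1 / INR n + INR K0 * (s * (INR K0 / (INR n * L) + 2 / INR n * L))).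
  { apply Rplus_le_le_0_compat. unfold Rdiv; apply Rmult_le_pos; [lra|apply Rlt_le, Rinv_0_lt_compat; lra].
    apply Rmult_le_pos; [apply pos_INR|]. apply Rmult_le_pos; [lra|]. apply Rplus_le_le_0_compat.
    unfold Rdiv; apply Rmult_le_pos; [apply pos_INR|apply Rlt_le, Rinv_0_lt_compat; nra].
    unfold Rdiv; apply Rmult_le_pos; [apply Rmult_le_pos; [lra|apply Rlt_le, Rinv_0_lt_compat; lra]|lra]. }
  assert ((L + 1) * (1 / INR n + INR K0 * (s * (INR K0 / (INR n * L) + 2 / INR n * L))) <= 2 * L * (64 * L ^ 3 / r)).
  { apply Rmult_le_compat; lra. }
  replace (128 * L ^ 4 / r) with (2 * L * (64 * L ^ 3 / r)) by (field; lra).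
  replace (1 / L + 1 / L) with (2 / L) by (field; lra). lra. Qed.

Lemma ln_INR0 : ln (INR 0) = 0.
Proof. unfold ln. destruct (Rlt_dec 0 (INR 0)) as [h|h]; [exfalso; rewrite INR_0 in h; exact (Rlt_irrefl 0 h)|auto]. Qed.

Lemma ln_nonneg_nat n : 0 <= ln (INR n).
Proof. destruct n. rewrite ln_INR0; lra.
  assert (1 <= INR (S n)) by (rewrite S_INR; pose proof (pos_INR n); lra).
  destruct (Req_dec (INR (S n)) 1) as [E|E]. rewrite E, ln_1; lra.
  left. rewrite <- ln_1. apply ln_increasing; lra. Qed.

Lemma rsum_ge_elem {A} (l : list A) f x : (forall y, In y l -> 0 <= f y) -> In x l -> f x <= rsum l f.
Proof. induction l; intros H Hx; [destruct Hx|]. rewrite rsum_cons. destruct Hx as [<-|Hx].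
  - pose proof (rsum_nonneg l f (fun y Hy => H y (or_intror Hy))). lra.
  - pose proof (H a (or_introl eq_refl)). pose proof (IHl (fun y Hy => H y (or_intror Hy)) Hx). lra. Qed.

Theorem lemma6 :
  exists eps : nat -> R, Un_cv eps 0 /\
    forall (D : nat) (p : nat -> R) (n : nat) (m : nat -> R) (S : list nat),
      is_distribution D p ->
      (forall j : nat, (1 <= j)%nat -> INR j < (ln (INR n))^2 ->
         0 <= m j <= 1 /\ m j < 2 / INR n * (ln (INR n))^2) ->
      (forall a, In a S -> (a < D)%nat /\ 0 < p a) ->
      faithful D p n S ->
      Rabs (total_error D p S n m - total_dev D p n m) <= eps n.
Proof.
  exists eps_fn. split; [apply eps_cv|].
  intros D p n m Sm Hdist Hm HS Hf.
  destruct Hdist as [Hp0 Hp1].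
  assert (Hp : forall a, In a (domain D) -> 0 <= p a <= 1).
  { intros a Ha. assert (0 <= p a) by (apply Hp0; unfold domain in Ha; apply in_seq in Ha; lia).
    split; auto. rewrite <- Hp1. apply rsum_ge_elem; auto.
    intros y Hy; apply Hp0; unfold domain in Hy; apply in_seq in Hy; lia. }
  destruct (js n) as [|j0 js'] eqn:Ejs.
  { unfold total_error, total_dev. rewrite Ejs, !rsum_nil, Rminus_0_r, Rabs_R0. apply eps_nonneg. }
  destruct (js_prop n j0) as [Hj01 Hj02]. rewrite Ejs; left; auto.
  pose proof (ln_nonneg_nat n) as Hl0.
  assert (1 <= INR j0) by (apply (le_INR 1); auto).
  assert (Hl : 1 <= ln (INR n)) by nra.
  assert (Hn : 0 < INR n).
  { destruct n. rewrite ln_INR0 in Hl; lra. apply lt_0_INR; lia. }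
  clear Ejs j0 js' Hj01 Hj02 H.
  set (K0 := Z.to_nat (up (6 * (ln (INR n) ^ 2) ^ 2))).
  assert (HK : 6 * (ln (INR n) ^ 2) ^ 2 <= INR K0 <= 6 * (ln (INR n) ^ 2) ^ 2 + 1).
  { unfold K0. pose proof (archimed (6 * (ln (INR n) ^ 2) ^ 2)) as [H1 H2].
    assert (0 <= (ln (INR n) ^ 2) ^ 2) by apply pow2_ge_0.
    rewrite (INR_IZR_INZ (Z.to_nat _)), Z2Nat.id. lra. apply le_IZR. lra. }
  assert (HQ : 0 < Qn n) by (unfold Qn; apply Rmult_lt_0_compat; [auto|nra]).
  destruct Hf as [Hlen [Hf1 Hf2]].
  assert (Hper : forall j, In j (js n) ->
    Rabs (rsum (domain D) (fun a => if Nat.eqb (occ Sm a) j then Rabs (p a - m j) else 0)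
          - rsum (domain D) (fun a => Rabs (p a - m j) * poi (INR n * p a) j))
    <= / Qn n * rsum (domain D) (fun a => if Nat.eqb (occ Sm a) j then 1 else 0)
       + / Qn n * rsum (domain D) (fun a => poi (INR n * p a) j)
       + (1 / INR n + INR K0 * (Rpower (INR n) 0.6 * (INR K0 / Qn n + 2 / INR n * ln (INR n) ^ 2)))).
  { intros j Hj. destruct (js_prop n j Hj) as [Hj1 Hj2].
    destruct (Hm j Hj1 Hj2) as [[Hm0 Hm1] Hm2].
    assert (Hin : forall a, In a (domain D) -> occ Sm a = j -> 0 < p a <= INR K0 / Qn n).
    { intros a Ha Ho. unfold domain in Ha. apply in_seq in Ha. split.
      - apply HS. apply (count_occ_In Nat.eq_dec). unfold occ in Ho. lia.
      - apply (occ_small D p n Sm a j K0); auto; try lia; tauto. }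
    pose proof (part_E D p n Sm j (m j) K0 HQ Hin) as PE.
    pose proof (part_M D p n Sm j (m j) K0 HQ Hm0 (fun k => Hf2 j k Hj2)) as PM.
    assert (Htail : forall a, In a (domain D) -> ~ (0 < p a /\ p a <= INR K0 / Qn n) ->
      Rabs (p a - m j) * poi (INR n * p a) j <= p a / INR n).
    { intros a Ha Hr. apply (tail_bound n j (p a) (m j) K0); auto; tauto. }
    pose proof (part_D D p n j (m j) K0 HQ Hn (fun a Ha => proj1 (Hp a Ha)) Htail) as PD.
    assert (Hsum : rsum (domain D) (fun a => p a / INR n) = 1 / INR n).
    { unfold Rdiv. rewrite rsum_scal_r, Hp1. reflexivity. }
    rewrite Hsum in PD.
    assert (INR K0 * (Rpower (INR n) 0.6 * (INR K0 / Qn n + m j)) <=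
            INR K0 * (Rpower (INR n) 0.6 * (INR K0 / Qn n + 2 / INR n * ln (INR n) ^ 2))).
    { apply Rmult_le_compat_l. apply pos_INR. apply Rmult_le_compat_l.
      unfold Rpower; apply Rlt_le, exp_pos. lra. }
    set (E := rsum (domain D) (fun a => if Nat.eqb (occ Sm a) j then Rabs (p a - m j) else 0)) in *.
    set (Dv := rsum (domain D) (fun a => Rabs (p a - m j) * poi (INR n * p a) j)) in *.
    set (A := rsum (seq 0 K0) (fun k => INR (B_S D p Sm n j k) * Rabs (INR (S k) / Qn n - m j))) in *.
    set (P := rsum (seq 0 K0) (fun k => B_poi D p n j k * Rabs (INR (S k) / Qn n - m j))) in *.
    rewrite Rabs_minus_sym in PD.
    replace (E - Dv) with ((E - A) + (A - P) + (P - Dv)) by ring.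
    eapply Rle_trans. apply Rabs_triang. eapply Rle_trans. apply Rplus_le_compat_r. apply Rabs_triang.
    lra. }
  rewrite toterr_eq. unfold total_dev.
  rewrite (rsum_ext (js n) (fun j => dev D p j n (m j)) _ (fun j _ => dev_eq D p j n (m j))).
  rewrite <- rsum_minus. eapply Rle_trans; [apply rsum_abs|].
  eapply Rle_trans; [apply rsum_le; exact Hper|].
  rewrite rsum_plus, rsum_const, rsum_plus, !rsum_scal.
  eapply Rle_trans; [|apply (final_arith n K0 Hl Hn HK)].
  assert (HX : rsum (js n) (fun j => rsum (domain D) (fun a => if Nat.eqb (occ Sm a) j then 1 else 0)) <= INR n).
  { rewrite rsum_swap. apply Rle_trans with (INR (length Sm)); [|rewrite Hlen; lra]. eapply Rle_trans; [|apply (count_sum_le (domain D) Sm (seq_NoDup D 0))].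
    apply rsum_le. intros a _. apply ind_sum_le_occ. apply js_nodup. intros j Hj; apply (js_prop n j Hj). }
  assert (HY : rsum (js n) (fun j => rsum (domain D) (fun a => poi (INR n * p a) j)) <= INR n).
  { rewrite rsum_swap. apply Rle_trans with (rsum (domain D) (fun a => INR n * p a)).
    apply rsum_le. intros a Ha. apply js_poi. pose proof (Hp a Ha); nra.
    rewrite rsum_scal, Hp1; lra. }
  assert (0 < / Qn n) by (apply Rinv_0_lt_compat; auto).
  pose proof (js_length n).
  assert (0 <= 1 / INR n + INR K0 * (Rpower (INR n) 0.6 * (INR K0 / Qn n + 2 / INR n * ln (INR n) ^ 2))).
  { apply Rplus_le_le_0_compat. unfold Rdiv; apply Rmult_le_pos; [lra|apply Rlt_le, Rinv_0_lt_compat; lra].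
    apply Rmult_le_pos; [apply pos_INR|]. apply Rmult_le_pos; [unfold Rpower; apply Rlt_le, exp_pos|].
    apply Rplus_le_le_0_compat. unfold Rdiv; apply Rmult_le_pos; [apply pos_INR|lra].
    unfold Rdiv; apply Rmult_le_pos; [apply Rmult_le_pos; [lra|apply Rlt_le, Rinv_0_lt_compat; lra]|apply pow2_ge_0]. }
  apply Rplus_le_compat. apply Rplus_le_compat; apply Rmult_le_compat_l; lra.
  apply Rmult_le_compat_r; auto. Qed.
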